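(* Let $\theta:R\to S$ be a ring homomorphism, and let $\mathfrak p\subset R$, $\mathfrak q\subset S$ be prime ideals with $\mathfrak p\subseteq\theta^{-1}(\mathfrak q)$. Suppose there exists an $R$-linear map $T:S\to R$ with $T(1)=1$ and $T(\mathfrak q)\subseteq\mathfrak p$. If $S$ is purely $F$-regular along $\mathfrak q$, then $R$ is purely $F$-regular along $\mathfrak p$.
   Context: All rings are noetherian $F$-finite commutative $\mathbb F_p$-algebras. $F^e_*R$ is $R$ viewed as an $R$-module via $r\mapsto r^{p^e}$; $\mathcal C_{e,R}=\operatorname{Hom}_R(F^e_*R,R)$. For an ideal $\mathfrak a$, $\phi\in\mathcal C_{e,R}$ is $\mathfrak a$-compatible if $\phi(F^e_*\mathfrak a)\subseteq\mathfrak a$. For a prime $\mathfrak p\subset R$, $R$ is purely $F$-regular along $\mathfrak p$ if (i) there exist $e>0$ and a $\mathfrak p$-compatible $\phi\in\mathcal C_{e,R}$ with $\phi(F^e_*R)\not\subseteq\mathfrak p$, and (ii) every proper ideal $\mathfrak b\subsetneq R$ that is $\phi$-compatible for every $e>0$ and every $\mathfrak p$-compatible $\phi\in\mathcal C_{e,R}$ satisfies $\mathfrak b\subseteq\mathfrak p$. (Equivalently: for every $r\notin\mathfrak p$ there are $e>0$ and a $\mathfrak p$-compatible $\phi\in\mathcal C_{e,R}$ with $\phi(F^e_*r)=1$.) *)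

(* Defs.v *)
From HB Require Import structures.
From mathcomp Require Import all_boot all_order all_algebra.
Set Implicit Arguments. Unset Strict Implicit. Unset Printing Implicit Defensive.
Import GRing.Theory.
Local Open Scope ring_scope.

Definition is_ideal (R : comNzRingType) (I : R -> Prop) : Prop :=
  [/\ I 0, (forall x y, I x -> I y -> I (x + y)) & (forall a x, I x -> I (a * x))].

Definition is_proper_ideal (R : comNzRingType) (I : R -> Prop) : Prop :=
  is_ideal I /\ ~ I 1.

Definition is_prime_ideal (R : comNzRingType) (I : R -> Prop) : Prop :=
  is_proper_ideal I /\ (forall x y, I (x * y) -> I x \/ I y).

Definition noetherian (R : comNzRingType) : Prop :=
  forall I : nat -> R -> Prop,
    (forall n, is_ideal (I n)) ->
    (forall n x, I n x -> I n.+1 x) ->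
    exists N, forall n x, (N <= n)%N -> I n x -> I N x.

(* F-finite (R of characteristic p): F_*R is a finitely generated R-module,
   i.e. there are s_1..s_k with every x = sum_i c_i^p * s_i. *)
Definition F_finite (p : nat) (R : comNzRingType) : Prop :=
  exists s : seq R, forall x : R, exists c : seq R,
    size c = size s /\ x = \sum_(i < size s) (c`_i) ^+ p * s`_i.

(* phi is an element of C_{e,R} = Hom_R(F^e_* R, R): additive, and
   phi (F^e_* (a^{p^e} x)) = a * phi (F^e_* x). *)
Definition in_Cartier (p : nat) (R : comNzRingType) (e : nat) (phi : R -> R) : Prop :=
  (forall x y, phi (x + y) = phi x + phi y) /\
  (forall a x, phi (a ^+ (p ^ e) * x) = a * phi x).

Definition compatible (R : comNzRingType) (I : R -> Prop) (phi : R -> R) : Prop :=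
  forall x, I x -> I (phi x).

Definition purely_F_regular_along (p : nat) (R : comNzRingType) (P : R -> Prop) : Prop :=
  (exists e : nat, exists phi : R -> R,
      (0 < e)%N /\ in_Cartier p e phi /\ compatible P phi /\
      exists x, ~ P (phi x)) /\
  (forall B : R -> Prop, is_proper_ideal B ->
     (forall (e : nat) (phi : R -> R), (0 < e)%N -> in_Cartier p e phi ->
         compatible P phi -> compatible B phi) ->
     forall x, B x -> P x).

(* Main.v *)
Require Import Defs.
From HB Require Import structures.
From mathcomp Require Import all_boot all_order all_algebra.
Import GRing.Theory.
From Stdlib Require Import Classical.
Local Open Scope ring_scope.

Lemma cart_comp (p : nat) (S : comNzRingType) n e (g f : S -> S) :
  in_Cartier p n g -> in_Cartier p e f -> in_Cartier p (n + e) (fun s => g (f s)).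
Proof.
move=> [gA gM] [fA fM]; split=> [x y|a x]; first by rewrite fA gA.
by rewrite expnD exprM fM gM.
Qed.

Lemma cart_mul (p : nat) (S : comNzRingType) n (g : S -> S) c :
  in_Cartier p n g -> in_Cartier p n (fun s => g (c * s)).
Proof.
move=> [gA gM]; split=> [x y|a x]; first by rewrite mulrDr gA.
by rewrite mulrCA gM.
Qed.

Lemma cart0 (p : nat) (S : comNzRingType) (g : S -> S) x :
  in_Cartier p 0 g -> g x = x * g 1.
Proof. by move=> [_ gM]; rewrite -gM expn0 expr1 mulr1. Qed.

Lemma add0 (S : comNzRingType) (R : comNzRingType) (f : S -> R) :
  (forall x y, f (x + y) = f x + f y) -> f 0 = 0.
Proof.
move=> fA; have := fA 0 0; rewrite addr0 -{1}[f 0]addr0 => /addrI.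
by move=> ->.
Qed.

Theorem proposition2p14 (p : nat) (R S : comNzRingType)
  (pR : p \in [pchar R]) (pS : p \in [pchar S])
  (noethR : noetherian R) (noethS : noetherian S)
  (ffR : F_finite p R) (ffS : F_finite p S)
  (theta : {rmorphism R -> S})
  (P : R -> Prop) (Q : S -> Prop)
  (primeP : is_prime_ideal P) (primeQ : is_prime_ideal Q)
  (PsubQ : forall r, P r -> Q (theta r))
  (T : S -> R)
  (T_add : forall x y, T (x + y) = T x + T y)
  (T_lin : forall (a : R) (x : S), T (theta a * x) = a * T x)
  (T1 : T 1 = 1)
  (TQ : forall x, Q x -> P (T x)) :
  purely_F_regular_along p Q -> purely_F_regular_along p P.
Proof.
move: primeP primeQ => [[[P0 PD PM] P1] _] [[[Q0 QD QM] Q1] _].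
have Tth : forall r, T (theta r) = r by move=> r; rewrite -[theta r]mulr1 T_lin T1 mulr1.
have pull : forall n (g : S -> S), in_Cartier p n g -> in_Cartier p n (fun r => T (g (theta r))).
  move=> n g [gA gM]; split=> [x y|a x]; first by rewrite rmorphD gA T_add.
  by rewrite rmorphM rmorphXn gM T_lin.
have pullc : forall g, compatible Q g -> compatible P (fun r => T (g (theta r))).
  by move=> g Hg x Px; apply/TQ/Hg/PsubQ.
pose Bs (B : R -> Prop) := fun s : S => forall n (g : S -> S),
   in_Cartier p n g -> compatible Q g -> B (T (g s)).
have BsI : forall B, is_proper_ideal B -> is_proper_ideal (Bs B).
  move=> B [[B0 BD BM] B1]; split; first split.
  - move=> n g [gA _] _; by rewrite (add0 _ _ _ gA) (add0 _ _ _ T_add).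
  - move=> x y Hx Hy n g Hc Hq; rewrite (proj1 Hc) T_add; apply: BD; [exact: (Hx n g Hc Hq)|exact: (Hy n g Hc Hq)].
  - move=> a x Hx n g Hc Hq; apply: (Hx n (fun s => g (a * s))); first exact: cart_mul.
    by move=> y Qy; apply/Hq/QM.
  - move=> H; apply: B1; rewrite -T1; apply: (H 0%N id); last by [].
    by split=> // a x; rewrite expn0 expr1.
have BsC : forall B e phi, (0 < e)%N -> in_Cartier p e phi -> compatible Q phi ->
    compatible (Bs B) phi.
  move=> B e phi _ Hphi Qphi x Hx n g Hg Qg.
  apply: (Hx (n + e)%N (fun s => g (phi s))); first exact: cart_comp.
  by move=> y Qy; apply/Qg/Qphi.
move=> [[e [phi [e0 [Hphi [Qphi [x nQ]]]]]] HS]; split.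
- have : ~ Bs P (phi x).
    move=> H; apply: nQ; apply: (HS (Bs P)); last exact: H.
      exact: BsI (conj (And3 P0 PD PM) P1).
    by move=> e1 phi1 h1 h2 h3; exact: BsC h1 h2 h3.
  have Bs_not : forall s, ~ Bs P s -> exists n g, in_Cartier p n g /\ compatible Q g /\ ~ P (T (g s)).
    move=> s Hs; apply: NNPP => Hn; apply: Hs => n g Hg Qg.
    apply: NNPP => HP; apply: Hn; by exists n, g.
  move=> /Bs_not [n [g [Hg [Qg nP]]]].
  exists (n + e)%N, (fun r => T (g (phi (x * theta r)))); split; first by rewrite addn_gt0 e0 orbT.
  split; first by apply: (pull _ (fun s => g (phi (x * s)))); apply: cart_comp => //; exact: cart_mul.
  split; first by apply: (pullc (fun s => g (phi (x * s)))) => y Qy; apply/Qg/Qphi/QM.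
  by exists 1; rewrite rmorph1 mulr1.
- move=> B HB HBc b Bb.
  have HBI := HB; move: HB => [[B0 BD BM] B1].
  rewrite -(Tth b); apply: TQ; apply: (HS (Bs B)).
  + exact: BsI.
  + by move=> e1 phi1 h1 h2 h3; exact: BsC h1 h2 h3.
  + move=> n g Hg Qg; case: n Hg => [|n] Hg.
      by rewrite (cart0 _ _ _ _ Hg) T_lin mulrC; apply: BM.
    by apply: (HBc n.+1 _ _ (pull _ _ Hg) (pullc _ Qg) b Bb).
Qed.
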